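(* Let $n \geq 2$ and $d$ be integers with $0 < d < n$, and write $n = n^1 \cdot d + n^0$ with $n^1, n^0 \in \mathbb{Z}$ and $0 \leq n^0 < d$. Let $a \in \mathbb{Z}_n$ and let $\langle a\rangle_0, \langle a\rangle_1 \in \mathbb{Z}_n$ satisfy $\langle a\rangle_0 + \langle a\rangle_1 = a$ in $\mathbb{Z}_n$. Let $a_u, a_0, a_1 \in \{0,1,\ldots,n-1\}$ be the unsigned representatives of $a, \langle a\rangle_0, \langle a\rangle_1$ respectively, and write $a_0 = a_0^1 \cdot d + a_0^0$ and $a_1 = a_1^1 \cdot d + a_1^0$ with $a_0^1,a_0^0,a_1^1,a_1^0 \in \mathbb{Z}$ and $0 \le a_0^0, a_1^0 < d$. Let $n' = \lceil n/2 \rceil$. Define integers $$\mathsf{corr} = \begin{cases} -1 & \text{if } (a_u \ge n') \wedge (a_0 < n') \wedge (a_1 < n'),\\ 1 & \text{if } (a_u < n') \wedge (a_0 \ge n') \wedge (a_1 \ge n'),\\ 0 & \text{otherwise,}\end{cases}$$ $$A = a_0^0 + a_1^0 - \big(\mathbf{1}\{a_0 \ge n'\} + \mathbf{1}\{a_1 \ge n'\} - \mathsf{corr}\big)\cdot n^0,$$ $$B = \mathsf{idiv}\big(a_0^0 - \mathbf{1}\{a_0 \ge n'\}\cdot n^0,\ d\big) + \mathsf{idiv}\big(a_1^0 - \mathbf{1}\{a_1 \ge n'\}\cdot n^0,\ d\big),$$ $$C = \mathbf{1}\{A < d\} + \mathbf{1}\{A < 0\} + \mathbf{1}\{A < -d\}.$$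 Then $$\mathsf{rdiv}(\langle a\rangle_0, d) + \mathsf{rdiv}(\langle a\rangle_1, d) + \big(\mathsf{corr}\cdot n^1 + 1 - C - B\big) \equiv \mathsf{rdiv}(a, d) \pmod n.$$
   Context: $\mathbf{1}\{P\}$ denotes the indicator that is $1$ if $P$ is true and $0$ otherwise. $\mathsf{idiv}:\mathbb{Z}\times\mathbb{Z}\to\mathbb{Z}$ is signed integer division in which the quotient is rounded towards $-\infty$ (so for $d>0$, $\mathsf{idiv}(x,d) = \lfloor x/d \rfloor$). For $x \in \mathbb{Z}_n$ with unsigned representative $x_u \in \{0,\ldots,n-1\}$ and an integer $0<d<n$, $\mathsf{rdiv}(x,d) \in \mathbb{Z}_n$ is defined as $\mathsf{idiv}\big(x_u - \mathbf{1}\{x_u \ge \lceil n/2\rceil\}\cdot n,\ d\big) \bmod n$, i.e. division of the signed value of $x$ by $d$, reduced mod $n$. The sum in the conclusion is taken in $\mathbb{Z}_n$ (integers reduced modulo $n$). *)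

(* Defs.v *)
From mathcomp Require Import all_boot all_order all_algebra.
Set Implicit Arguments. Unset Strict Implicit. Unset Printing Implicit Defensive.
Import Order.TTheory GRing.Theory Num.Theory.
Local Open Scope ring_scope.

Definition ind (b : bool) : int := (b : nat)%:Z.

(* signed integer division rounding towards -oo (floor division).
   For d > 0 this is mathcomp's Euclidean quotient (x %/ d)%Z. *)
Definition idiv (x d : int) : int :=
  if (0 < d) then (x %/ d)%Z
  else if (d < 0) then ((- x) %/ (- d))%Z
  else 0.

Definition halfup (n : nat) : nat := n.+1./2.

(* rdiv x d in Z_n : divide the signed value of x by d, reduce mod n.
   The unsigned representative of x : 'Z_n is its value (valid when 1 < n). *)
Definition rdiv (n : nat) (x : 'Z_n) (d : nat) : 'Z_n :=
  (idiv ((x : nat)%:Z - ind (halfup n <= x)%N * n%:Z) d%:Z)%:~R.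

(* Main.v *)
Require Import Defs.
From mathcomp Require Import all_boot all_order all_algebra zify ring.
Import Order.TTheory GRing.Theory Num.Theory.
Local Open Scope ring_scope.
Lemma key (N x0 x1 xa np : nat) (hN : (N <= np * 2 <= N + 1)%N)
  (h0 : (x0 < N)%N) (h1 : (x1 < N)%N) (ha : xa = ((x0 + x1) %% N)%N) :
  xa%:Z - ind (np <= xa)%N * N%:Z =
  x0%:Z - ind (np <= x0)%N * N%:Z + (x1%:Z - ind (np <= x1)%N * N%:Z) +
  (if [&& (np <= xa)%N, (x0 < np)%N & (x1 < np)%N] then -1
    else if [&& (xa < np)%N, (np <= x0)%N & (np <= x1)%N] then 1
    else 0) * N%:Z.
Proof.
have [hs|hs] := ltnP (x0 + x1) N.
  rewrite modn_small // in ha.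
  subst xa; rewrite /ind.
  case: (leqP np (x0+x1)); case: (leqP np x0); case: (leqP np x1) => /= *; lia.
have ha' : xa = (x0 + x1 - N)%N.
  have e : (x0 + x1 = (x0 + x1 - N) + N)%N by lia.
  rewrite ha e modnDr modn_small //; lia.
clear ha; subst xa; rewrite /ind.
move: (x0+x1-N)%N (subnK hs) => y hy.
case: (leqP np y); case: (leqP np x0); case: (leqP np x1) => /= *.
Time all: lia.
Qed.

Lemma floorA (A d : int) (hd : 0 < d) (h1 : - (2 * d) <= A) (h2 : A < 2 * d) :
  (A %/ d)%Z = 1 - (ind (A < d) + ind (A < 0) + ind (A < - d)).
Proof.
have hd0 : d != 0 by lia.
have E : forall k : int, 0 <= A - k * d < d -> (A %/ d)%Z = k.
  move=> k hk; rewrite -(addrNK (k * d) A) addrC divzMDl // divz_small ?addr0 //.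
  by rewrite abszE gtr0_norm.
rewrite /ind.
case: (ltrP A d) => h3; case: (ltrP A 0) => h4; case: (ltrP A (-d)) => h5 /=.
- rewrite (E (-2)) //; lia.
- rewrite (E (-1)) //; lia.
- lia.
- rewrite (E 0) //; lia.
- lia. - lia. - lia.
- rewrite (E 1) //; lia.
Qed.
Theorem theorem4p1 (n d : nat) (hn : (2 <= n)%N) (hd0 : (0 < d)%N) (hdn : (d < n)%N)
  (n1 n0 : int) (hnd : n%:Z = n1 * d%:Z + n0) (hn0 : 0 <= n0) (hn0d : n0 < d%:Z)
  (a a0 a1 : 'Z_n) (hsum : a0 + a1 = a)
  (a01 a00 a11 a10 : int)
  (ha0 : (a0 : nat)%:Z = a01 * d%:Z + a00) (ha00 : 0 <= a00) (ha00d : a00 < d%:Z)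
  (ha1 : (a1 : nat)%:Z = a11 * d%:Z + a10) (ha10 : 0 <= a10) (ha10d : a10 < d%:Z) :
  let n' := halfup n in
  let corr : int :=
    if [&& (n' <= a)%N, (a0 < n')%N & (a1 < n')%N] then -1
    else if [&& (a < n')%N, (n' <= a0)%N & (n' <= a1)%N] then 1
    else 0 in
  let A : int := a00 + a10 - (ind (n' <= a0)%N + ind (n' <= a1)%N - corr) * n0 in
  let B : int := idiv (a00 - ind (n' <= a0)%N * n0) d%:Z
               + idiv (a10 - ind (n' <= a1)%N * n0) d%:Z in
  let C : int := ind (A < d%:Z) + ind (A < 0) + ind (A < - d%:Z) in
  rdiv a0 d + rdiv a1 d + (corr * n1 + 1 - C - B)%:~R = rdiv a d.
Proof.
move=> n' corr A B C.
have [m Hm] : exists m, n = m.+2 by exists n.-2; lia.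
subst n.
have hN : (m.+2 <= n' * 2 <= m.+2 + 1)%N by rewrite /n' /halfup; lia.
have ha : (nat_of_ord a = (nat_of_ord a0 + nat_of_ord a1) %% m.+2)%N by rewrite -hsum.
have hk := @key m.+2 _ _ _ n' hN (ltn_ord a0) (ltn_ord a1) ha.
have hdz : 0 < d%:Z by lia.
have hdz0 : d%:Z != 0 by lia.
rewrite /rdiv -!intrD; congr (_%:~R).
rewrite /B /C /idiv hdz hk.
set i0 := ind (n' <= a0)%N.
set i1 := ind (n' <= a1)%N.
set N := (m.+2)%:Z.
have e0 : (nat_of_ord a0)%:Z - i0 * N = (a01 - i0 * n1) * d%:Z + (a00 - i0 * n0).
  by rewrite ha0 /N hnd; ring.
have e1 : (nat_of_ord a1)%:Z - i1 * N = (a11 - i1 * n1) * d%:Z + (a10 - i1 * n0).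
  by rewrite ha1 /N hnd; ring.
have ea : (nat_of_ord a0)%:Z - i0 * N + ((nat_of_ord a1)%:Z - i1 * N) + corr * N
   = (a01 - i0 * n1 + (a11 - i1 * n1) + corr * n1) * d%:Z + A.
  by rewrite e0 e1 /A -/i0 -/i1 /N hnd; ring.
have hK : (i0 + i1 - corr = 0) \/ (i0 + i1 - corr = 1) \/ (i0 + i1 - corr = 2).
  rewrite /i0 /i1 /corr /ind.
  case: (leqP n' a0); case: (leqP n' a1); case: (leqP n' a) => /= *; lia.
have hA1 : - (2 * d%:Z) <= A /\ A < 2 * d%:Z.
  rewrite /A -/i0 -/i1.
  case: hK => [->|[->|->]]; lia.
case: hA1 => hA1 hA2.
rewrite ea e0 e1 !divzMDl // (@floorA _ _ hdz hA1 hA2).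
ring.
Qed.
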